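(* Let $\{X_t\}_{t\in\mathbb N^+}$ be a real-valued process adapted to a filtration $\{\mathcal F_t\}_{t\in\mathbb N}$ with $\mathcal F_0$ trivial, such that for all $t\in\mathbb N^+$, $\mathbb E[X_t\mid\mathcal F_{t-1}]=\mu$ (a constant) and $\mathbb E[(X_t-\mu)^2\mid\mathcal F_{t-1}]\le\sigma^2$. Let $\{\lambda_t\}_{t\in\mathbb N^+}$ be any predictable process and let $\phi$ be a Catoni-type influence function. Then the processes $$M^{\mathsf C}_t=\prod_{i=1}^t\exp\left(\phi(\lambda_i(X_i-\mu))-\lambda_i^2\sigma^2/2\right),\qquad N^{\mathsf C}_t=\prod_{i=1}^t\exp\left(-\phi(\lambda_i(X_i-\mu))-\lambda_i^2\sigma^2/2\right)$$ (with $M^{\mathsf C}_0=N^{\mathsf C}_0=1$) are nonnegative supermartingales with respect to $\{\mathcal F_t\}$.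
   Context: A process $\{\lambda_t\}$ is predictable if each $\lambda_t$ is $\mathcal F_{t-1}$-measurable. A function $\phi:\mathbb R\to\mathbb R$ is a Catoni-type influence function if it is increasing and $-\log(1-x+x^2/2)\le\phi(x)\le\log(1+x+x^2/2)$ for all $x\in\mathbb R$. *)

(* Defs.v *)
From HB Require Import structures.
From mathcomp Require Import all_boot all_order all_algebra.
From mathcomp Require Import all_classical all_reals all_analysis.
Set Implicit Arguments. Unset Strict Implicit. Unset Printing Implicit Defensive.
Import Order.TTheory GRing.Theory Num.Theory.
Local Open Scope classical_set_scope.
Local Open Scope ring_scope.

Definition sub_sigma d (T : measurableType d) (G : set (set T)) :=
  sigma_algebra setT G /\ G `<=` measurable.

Definition G_measurable d (T : measurableType d) (R : realType)
  (G : set (set T)) (f : T -> R) :=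
  forall B : set R, measurable B -> G (f @^-1` B).

Definition filtration d (T : measurableType d) (F : nat -> set (set T)) :=
  (forall n, sub_sigma (F n)) /\ (forall n, F n `<=` F n.+1).

Definition adapted d (T : measurableType d) (R : realType)
  (F : nat -> set (set T)) (X : nat -> T -> R) :=
  forall n, G_measurable (F n) (X n).

Definition cond_exp_version d (T : measurableType d) (R : realType)
  (P : probability T R) (G : set (set T)) (X Y : T -> R) :=
  [/\ P.-integrable setT (EFin \o X),
      G_measurable G Y,
      P.-integrable setT (EFin \o Y) &
      forall A, G A -> (\int[P]_(x in A) (X x)%:E = \int[P]_(x in A) (Y x)%:E)%E].

Definition supermartingale d (T : measurableType d) (R : realType)
  (P : probability T R) (F : nat -> set (set T)) (M : nat -> T -> R) :=
  [/\ adapted F M,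
      forall t, P.-integrable setT (EFin \o M t) &
      forall t (Y : T -> R), cond_exp_version P (F t) (M t.+1) Y ->
        {ae P, forall x, Y x <= M t x}].

Definition catoni_type (R : realType) (phi : R -> R) :=
  {homo phi : x y / x <= y} /\
  forall x, - ln (1 - x + x ^+ 2 / 2) <= phi x /\ phi x <= ln (1 + x + x ^+ 2 / 2).

Definition catoniM (R : realType) T (phi : R -> R) (lam X : nat -> T -> R)
  (mu sigma : R) (t : nat) (x : T) : R :=
  \prod_(i < t) expR (phi (lam i.+1 x * (X i.+1 x - mu))
                      - lam i.+1 x ^+ 2 * sigma ^+ 2 / 2).

Definition catoniN (R : realType) T (phi : R -> R) (lam X : nat -> T -> R)
  (mu sigma : R) (t : nat) (x : T) : R :=
  \prod_(i < t) expR (- phi (lam i.+1 x * (X i.+1 x - mu))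
                      - lam i.+1 x ^+ 2 * sigma ^+ 2 / 2).

(* Main.v *)
Require Import Defs.
From HB Require Import structures.
From mathcomp Require Import all_boot all_order all_algebra.
From mathcomp Require Import all_classical all_reals all_analysis.
From mathcomp Require Import measurable_realfun.
From mathcomp Require Import ring lra.
Import Order.TTheory GRing.Theory Num.Theory.
Local Open Scope classical_set_scope.
Local Open Scope ring_scope.

Section RealAux.
Variable R : realType.
Implicit Types y w z e l D : R.

Lemma maxpn y : y = Num.max y 0 - Num.max (- y) 0.
Proof.
have [h|h] := lerP 0 y.
  have -> : Num.max (- y) 0 = 0 by apply/max_idPr; rewrite oppr_le0.
  by rewrite subr0.
have -> : Num.max (- y) 0 = - y by apply/max_idPl; rewrite oppr_ge0 ltW.
by rewrite sub0r opprK.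
Qed.

Lemma maxp_le y : Num.max y 0 <= `|y|.
Proof. by rewrite ge_max normr_ge0 ler_norm. Qed.

Lemma maxn_le y : Num.max (- y) 0 <= `|y|.
Proof. by rewrite ge_max normr_ge0 -normrN ler_norm. Qed.

Lemma abs_le_quad w : `|w| <= 1 + w ^+ 2 / 2.
Proof.
rewrite -real_normK ?num_real//.
have := sqr_ge0 (`|w| - 1); have := normr_ge0 w; nra.
Qed.

Lemma pw_real z e l D lp ln dp dn : 0 <= z -> e <= 1 + l * D + (l * D) ^+ 2 / 2 ->
  l = lp - ln -> D = dp - dn ->
  z * e + z * lp * dn + z * ln * dp <=
  z + z * lp * dp + z * ln * dn + z * l ^+ 2 / 2 * D ^+ 2.
Proof.
move=> z0 he El ED.
apply: le_trans (lerD (lerD (ler_wpM2l z0 he) (lexx _)) (lexx _)) _.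
rewrite El ED le_eqVlt; apply/orP; left; apply/eqP; ring.
Qed.

Lemma pw_real2 z l D : 0 <= z ->
  z * Num.max l 0 * Num.max (- D) 0 <= z + z * l ^+ 2 / 2 * D ^+ 2 /\
  z * Num.max (- l) 0 * Num.max D 0 <= z + z * l ^+ 2 / 2 * D ^+ 2.
Proof.
move=> z0.
have h : `|l| * `|D| <= 1 + l ^+ 2 / 2 * D ^+ 2.
  rewrite -normrM; apply: le_trans (abs_le_quad _) _.
  by rewrite exprMn mulrAC.
have e : z + z * l ^+ 2 / 2 * D ^+ 2 = z * (1 + l ^+ 2 / 2 * D ^+ 2) by ring.
rewrite e; split; rewrite -mulrA; apply: ler_wpM2l => //; apply: (le_trans _ h).
  apply: ler_pM; rewrite ?le_max ?lexx ?orbT //; [exact: maxp_le|exact: maxn_le].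
apply: ler_pM; rewrite ?le_max ?lexx ?orbT //; [exact: maxn_le|exact: maxp_le].
Qed.

Lemma expRN1D_le1 (a : R) : expR (- a) * (1 + a) <= 1.
Proof.
rewrite expRN mulrC ler_pdivrMr ?expR_gt0// mul1r; exact: expR_ge1Dx.
Qed.
End RealAux.
Arguments pw_real {R z e l D lp ln dp dn}.
Arguments pw_real2 {R z l D}.
Arguments maxpn {R}.
Arguments expRN1D_le1 {R}.
Arguments abs_le_quad {R}.

Import HBNNSimple.
Section GM.
Context (R : realType) d (T : measurableType d) (G : set (set T)).
Hypothesis sG : sigma_algebra setT G /\ G `<=` measurable.
Local Notation TG := (g_sigma_algebraType G).
Lemma GmeasE (A : set T) : (measurable : set (set TG)) A = G A.
Proof. by rewrite measurable_g_measurableTypeE //; case: sG. Qed.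

Lemma GT_mfun (f : T -> R) : measurable_fun [set: TG] (f : TG -> R) ->
  measurable_fun [set: T] f.
Proof.
move=> h _ B mB; apply: sG.2; rewrite -GmeasE; exact: h.
Qed.

Variable P : probability T R.

Lemma GM_mfun (f : T -> R) : G_measurable G f <-> measurable_fun [set: TG] (f : TG -> R).
Proof.
split => [h _ B mB| h B mB]; first by rewrite setTI GmeasE; exact: h.
by rewrite -GmeasE -[X in measurable X]setTI; exact: h.
Qed.

Lemma GM_T (f : T -> R) : G_measurable G f -> measurable_fun [set: T] f.
Proof. by move/GM_mfun; exact: GT_mfun. Qed.

Lemma int_indic (A : set T) (f : T -> R) :
  (\int[P]_(x in A) (f x)%:E = \int[P]_x (\1_A x * f x)%:E)%E.
Proof.
rewrite integral_mkcond; apply: eq_integral => z _.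
rewrite patchE indicE; case: (boolP (z \in _)) => _ /=.
  by rewrite mul1r.
by rewrite mul0r.
Qed.

Lemma L_ae (Y Z : T -> R) : G_measurable G Y -> G_measurable G Z ->
  P.-integrable setT (EFin \o Y) -> P.-integrable setT (EFin \o Z) ->
  (forall A, G A -> (\int[P]_(x in A) (Y x)%:E <= \int[P]_(x in A) (Z x)%:E)%E) ->
  {ae P, forall x, Y x <= Z x}.
Proof.
move=> /GM_mfun mY /GM_mfun mZ iY iZ hA.
set A := [set x | Z x < Y x].
have GA : G A.
  rewrite -GmeasE.
  have := measurable_funB mY mZ measurableT (measurable_itv `]0%R, +oo[).
  rewrite setTI (_ : _ @^-1` _ = A) //; apply/seteqP; split => x /=;
    by rewrite in_itv /= andbT subr_gt0.
have mA : measurable A := sG.2 _ GA.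
have mYZ : measurable_fun A (fun x => (Y x - Z x)%:E).
  have h := measurable_funB (GT_mfun _ mY) (GT_mfun _ mZ).
  by apply/measurable_EFinP; apply: measurable_funTS.
have i0 : (\int[P]_(x in A) (Y x - Z x)%:E = 0)%E.
  apply/eqP; rewrite eq_le; apply/andP; split.
    have -> : (\int[P]_(x in A) (Y x - Z x)%:E =
      \int[P]_(x in A) ((EFin \o Y) \- (EFin \o Z)) x)%E by [].
    rewrite integralB//; [|exact: integrableS iY|exact: integrableS iZ].
    by rewrite sube_le0; apply: hA.
  by apply: integral_ge0 => x Ax; rewrite lee_fin subr_ge0 ltW.
have : (\int[P]_(x in A) `|(Y x - Z x)%:E| = 0)%E.
  rewrite -i0; apply: eq_integral => x /set_mem Ax.
  by rewrite gee0_abs// lee_fin subr_ge0 ltW.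
move/(ae_eq_integral_abs P mA mYZ).
apply: filterS => x h; rewrite leNgt; apply/negP => lt.
by have := h lt; move=> /= [] /eqP; rewrite subr_eq0 gt_eqF.
Qed.


Lemma simple_le (W1 W2 : T -> R) :
  (forall x, 0 <= W1 x) -> (forall x, 0 <= W2 x) ->
  measurable_fun setT W1 -> measurable_fun setT W2 ->
  (forall A, G A -> (\int[P]_(x in A) (W1 x)%:E <= \int[P]_(x in A) (W2 x)%:E)%E) ->
  forall s : {nnsfun TG >-> R},
  (\int[P]_x (s (x : TG) * W1 x)%:E <= \int[P]_x (s (x : TG) * W2 x)%:E)%E.
Proof.
move=> W10 W20 mW1 mW2 hA s.
have fr : finite_set (range s) by exact: fimfunP.
have mpre y : G (s @^-1` [set y]).
  by rewrite -GmeasE; exact: measurable_funPTI.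
have E (W : T -> R) : (forall x, 0 <= W x) -> measurable_fun setT W ->
    (\int[P]_x (s (x : TG) * W x)%:E = \sum_(y \in range s) (y%:E * \int[P]_(x in s @^-1` [set y]) (W x)%:E))%E.
  move=> W0 mW.
  have eqx x : ((s x * W x)%:E = \sum_(y \in range s) (y * \1_(s @^-1` [set y]) x * W x)%:E)%E.
    rewrite fsumEFin//; congr (_%:E).
    rewrite (fsbigD1 (s x))// /= indicE mem_set// mulr1 fsbig1 ?addr0//.
    by move=> y [fy /= /nesym yfx]; rewrite indicE memNset ?mulr0 ?mul0r.
  under eq_integral => x _ do rewrite eqx.
  have y0 y x : 0 <= y * \1_(s @^-1` [set y]) x.
    rewrite indicE; case: (boolP (x \in _)) => [/set_mem <-|_].
      by rewrite mulr1.
    by rewrite mulr0.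
  rewrite ge0_integral_fsum//; first last.
  - by move=> y x _; rewrite lee_fin mulr_ge0.
  - move=> y; apply/measurable_EFinP; apply: measurable_funM => //.
    apply: measurable_funM => //.
    by apply: measurable_indic; apply: sG.2.
  apply: eq_fsbigr => y /set_mem -[x _ <-].
  under eq_integral do rewrite -mulrA EFinM.
  rewrite ge0_integralZl_EFin//; first last.
  - apply/measurable_EFinP; apply: measurable_funM => //.
    by apply: measurable_indic; apply: sG.2.
  - by move=> z _; rewrite lee_fin mulr_ge0.
  congr (_ * _)%E; rewrite [RHS]integral_mkcond; apply: eq_integral => z _.
  rewrite patchE indicE; case: (boolP (z \in _)) => _ /=.
    by rewrite mul1r.
  by rewrite mul0r.
rewrite !E//.
apply: lee_fsum => // y -[x _ <-].
apply: lee_wpmul2l; first by rewrite lee_fin.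
exact: hA.
Qed.

Lemma K_le (W1 W2 : T -> R) :
  (forall x, 0 <= W1 x) -> (forall x, 0 <= W2 x) ->
  measurable_fun setT W1 -> measurable_fun setT W2 ->
  (forall A, G A -> (\int[P]_(x in A) (W1 x)%:E <= \int[P]_(x in A) (W2 x)%:E)%E) ->
  forall H : T -> R, (forall x, 0 <= H x) -> measurable_fun [set: TG] (H : TG -> R) ->
  (\int[P]_x (H x * W1 x)%:E <= \int[P]_x (H x * W2 x)%:E)%E.
Proof.
move=> W10 W20 mW1 mW2 hA H H0 mH.
have mH' : measurable_fun [set: TG] ((fun x => (H x)%:E) : TG -> \bar R).
  exact/measurable_EFinP.
pose h := nnsfun_approx (@measurableT _ TG) mH'.
have cv x : (fun n => (h n x)%:E) @ \oo --> (H x)%:E.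
  by apply: (cvg_nnsfun_approx (@measurableT _ TG) mH') => // y _; rewrite lee_fin.
have mh n : measurable_fun [set: T] (h n : T -> R).
  by apply: GT_mfun; exact: measurable_funPT.
have nd (W : T -> R) (W0 : forall x, 0 <= W x) x :
    {homo (fun n => (h n x * W x)%:E) : n m / (n <= m)%N >-> (n <= m)%E}.
  move=> m n mn; rewrite lee_fin ler_wpM2r//.
  by have /lefP := nd_nnsfun_approx (@measurableT _ TG) mH' mn; apply.
have lim (W : T -> R) (W0 : forall x, 0 <= W x) (mW : measurable_fun setT W) :
    (\int[P]_x (H x * W x)%:E = limn (fun n => \int[P]_x (h n x * W x)%:E))%E.
  rewrite -monotone_convergence //.
  - apply: eq_integral => x _; apply/esym/cvg_lim => //.
    under eq_fun do rewrite EFinM; rewrite EFinM; apply: cvgeZr => //; exact: cv.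
  - move=> n; apply/measurable_EFinP.
    exact: measurable_funM.
  - by move=> n x _; rewrite lee_fin mulr_ge0.
  - by move=> x _; exact: nd.
have cvI (W : T -> R) (W0 : forall x, 0 <= W x) (mW : measurable_fun setT W) :
    cvgn (fun n => \int[P]_x (h n x * W x)%:E)%E.
  apply: ereal_nondecreasing_is_cvgn => m n mn; apply: ge0_le_integral => //.
  - by move=> x _; rewrite lee_fin mulr_ge0.
  - apply/measurable_EFinP.
    exact: measurable_funM.
  - apply/measurable_EFinP.
    exact: measurable_funM.
  - by move=> x _; exact: nd.
rewrite !lim//; apply: lee_lim; [exact: cvI|exact: cvI|].
by apply: nearW => n; exact: simple_le.
Qed.
End GM.
Arguments GM_mfun {R d T G} sG f.
Arguments GT_mfun {R d T G} sG f.
Arguments GM_T {R d T G} sG f.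
Arguments GmeasE {d T G} sG A.
Arguments K_le {R d T G} sG P W1 W2.
Arguments L_ae {R d T G} sG P Y Z.
Arguments int_indic {R d T} P A f.

Section Main.
Context (R : realType) (d : measure_display) (T : measurableType d)
  (P : probability T R) (F : nat -> set (set T)) (X lam : nat -> T -> R)
  (mu sigma : R) (g : R -> R).
Hypothesis hF : filtration F.
Hypothesis hX : forall t, G_measurable (F t.+1) (X t.+1).
Hypothesis hmu : forall t, cond_exp_version P (F t) (X t.+1) (fun _ => mu).
Hypothesis hsig : forall t, exists Y : T -> R,
      cond_exp_version P (F t) (fun x => (X t.+1 x - mu) ^+ 2) Y /\
      {ae P, forall x, Y x <= sigma ^+ 2}.
Hypothesis hlam : forall t, G_measurable (F t) (lam t.+1).
Hypothesis mg : measurable_fun setT g.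
Hypothesis hg : forall v, expR (g v) <= 1 + v + v ^+ 2 / 2.

Local Notation M := (catoniM g lam X mu sigma).

Lemma M_ge0 t x : 0 <= M t x.
Proof. by rewrite /catoniM; apply: prodr_ge0 => i _; exact: expR_ge0. Qed.

Lemma MS t x : M t.+1 x = M t x * expR (g (lam t.+1 x * (X t.+1 x - mu))
                      - lam t.+1 x ^+ 2 * sigma ^+ 2 / 2).
Proof. by rewrite /catoniM big_ord_recr. Qed.

Lemma GM_mono s t (f : T -> R) : (s <= t)%N -> G_measurable (F s) f -> G_measurable (F t) f.
Proof.
move=> st h; elim: t st => [|t IH]; first by rewrite leqn0 => /eqP <-.
rewrite leq_eqVlt => /orP[/eqP <- //|]; rewrite ltnS => /IH h' B mB.
exact/hF.2/h'.
Qed.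

Lemma M_adapted : adapted F M.
Proof.
elim => [|t IH].
  have -> : M 0 = fun=> 1 by apply/funext => x; rewrite /catoniM big_ord0.
  by apply/(GM_mfun (hF.1 0)); exact: measurable_cst.
have sG := hF.1 t.+1.
have -> : M t.+1 = (fun x => M t x * expR (g (lam t.+1 x * (X t.+1 x - mu))
                      - lam t.+1 x ^+ 2 * sigma ^+ 2 / 2)).
  by apply/funext => x; exact: MS.
have mM := (GM_mfun sG _).1 (GM_mono _ _ _ (leqnSn t) IH).
have ml := (GM_mfun sG _).1 (GM_mono _ _ _ (leqnSn t) (hlam t)).
have mX := (GM_mfun sG _).1 (hX t).
apply/(GM_mfun sG); apply: measurable_realfun.measurable_funM => //.
apply: measurableT_comp; first exact: measurable_expR.
apply: measurable_funB.
  apply: measurableT_comp => //; apply: measurable_realfun.measurable_funM => //.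
  exact: measurable_funB.
apply: measurable_realfun.measurable_funM => //.
apply: measurable_realfun.measurable_funM => //.
exact: measurable_funX.
Qed.


Lemma intD (f h : T -> R) : (forall x, 0 <= f x) -> (forall x, 0 <= h x) ->
  measurable_fun setT f -> measurable_fun setT h ->
  (\int[P]_x (f x + h x)%:E = \int[P]_x (f x)%:E + \int[P]_x (h x)%:E)%E.
Proof.
move=> f0 h0 mf mh; under eq_integral do rewrite EFinD.
apply: ge0_integralD => //.
- by move=> x _; rewrite lee_fin.
- exact/measurable_EFinP.
- by move=> x _; rewrite lee_fin.
- exact/measurable_EFinP.
Qed.

Lemma intle (f h : T -> R) : (forall x, 0 <= f x) -> 
  measurable_fun setT f -> measurable_fun setT h -> (forall x, f x <= h x) ->
  (\int[P]_x (f x)%:E <= \int[P]_x (h x)%:E)%E.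
Proof.
move=> f0 mf mh fh; apply: ge0_le_integral => //.
- by move=> x _; rewrite lee_fin.
- exact/measurable_EFinP.
- exact/measurable_EFinP.
- by move=> x _; rewrite lee_fin.
Qed.

Lemma int_ge0 (f : T -> R) : (forall x, 0 <= f x) -> (0 <= \int[P]_x (f x)%:E)%E.
Proof. by move=> f0; apply: integral_ge0 => x _; rewrite lee_fin. Qed.

Lemma intD3 (f1 f2 f3 : T -> R) : (forall x, 0 <= f1 x) -> (forall x, 0 <= f2 x) ->
  (forall x, 0 <= f3 x) ->
  measurable_fun setT f1 -> measurable_fun setT f2 -> measurable_fun setT f3 ->
  (\int[P]_x (f1 x + f2 x + f3 x)%:E =
   \int[P]_x (f1 x)%:E + \int[P]_x (f2 x)%:E + \int[P]_x (f3 x)%:E)%E.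
Proof.
move=> h1 h2 h3 m1 m2 m3.
rewrite intD//; last exact: measurable_funD.
  by rewrite intD.
by move=> x; rewrite addr_ge0.
Qed.

Lemma intD4 (f1 f2 f3 f4 : T -> R) : (forall x, 0 <= f1 x) -> (forall x, 0 <= f2 x) ->
  (forall x, 0 <= f3 x) -> (forall x, 0 <= f4 x) ->
  measurable_fun setT f1 -> measurable_fun setT f2 -> measurable_fun setT f3 ->
  measurable_fun setT f4 ->
  (\int[P]_x (f1 x + f2 x + f3 x + f4 x)%:E =
   \int[P]_x (f1 x)%:E + \int[P]_x (f2 x)%:E + \int[P]_x (f3 x)%:E + \int[P]_x (f4 x)%:E)%E.
Proof.
move=> h1 h2 h3 h4 m1 m2 m3 m4.
rewrite intD//; last by apply: measurable_funD => //; exact: measurable_funD.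
  by rewrite intD3.
by move=> x; rewrite !addr_ge0.
Qed.

Lemma core_step t : (\int[P]_x (M t x)%:E < +oo)%E -> forall A, F t A ->
  (\int[P]_(x in A) (M t.+1 x)%:E <= \int[P]_(x in A) (M t x)%:E)%E.
Proof.
move=> fin A GA.
have sG := hF.1 t.
have [iX _ _ hXA] := hmu t.
have [Y [[iD2 mY iY hYA] aeY]] := hsig t.
pose l := lam t.+1.
pose D x := X t.+1 x - mu.
pose a x := l x ^+ 2 * sigma ^+ 2 / 2.
pose Z x := \1_A x * M t x * expR (- a x).
pose lp := l^\+. pose ln := l^\-. pose Dp := D^\+. pose Dn := D^\-.
pose q x := Z x * l x ^+ 2 / 2.
have I01 x : 0 <= (\1_A x : R) /\ (\1_A x : R) <= 1.
  by rewrite indicE; case: (x \in A) => /=; rewrite ?lexx ?ler01.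
have Z0 x : 0 <= Z x.
  by rewrite /Z mulr_ge0 ?expR_ge0// mulr_ge0 ?M_ge0//; case: (I01 x).
have lp0 x : 0 <= lp x by rewrite /lp /funrpos le_max lexx orbT.
have ln0 x : 0 <= ln x by rewrite /ln /funrneg le_max lexx orbT.
have Dp0 x : 0 <= Dp x by rewrite /Dp /funrpos le_max lexx orbT.
have Dn0 x : 0 <= Dn x by rewrite /Dn /funrneg le_max lexx orbT.
have q0 x : 0 <= q x by rewrite /q mulr_ge0// mulr_ge0// sqr_ge0.
have mMG : measurable_fun [set: g_sigma_algebraType (F t)] (M t : _ -> R).
  exact: (GM_mfun sG _).1 (M_adapted t).
have mlG : measurable_fun [set: g_sigma_algebraType (F t)] (l : _ -> R).
  exact: (GM_mfun sG _).1 (hlam t).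
have mIG : measurable_fun [set: g_sigma_algebraType (F t)] (\1_A : _ -> R).
  by apply: measurable_indic; rewrite GmeasE.
have mZG : measurable_fun [set: g_sigma_algebraType (F t)] (Z : _ -> R).
  apply: measurable_realfun.measurable_funM; first exact: measurable_realfun.measurable_funM.
  apply: measurableT_comp; first exact: measurable_expR.
  apply: measurable_funN; apply: measurable_realfun.measurable_funM => //.
  apply: measurable_realfun.measurable_funM => //; exact: measurable_funX.
have mZlpG : measurable_fun [set: g_sigma_algebraType (F t)] ((fun x => Z x * lp x) : _ -> R).
  exact: (measurable_realfun.measurable_funM mZG (measurable_funrpos mlG)).
have mZlnG : measurable_fun [set: g_sigma_algebraType (F t)] ((fun x => Z x * ln x) : _ -> R).
  exact: (measurable_realfun.measurable_funM mZG (measurable_funrneg mlG)).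
have mqG : measurable_fun [set: g_sigma_algebraType (F t)] (q : _ -> R).
  apply: measurable_realfun.measurable_funM => //.
  apply: measurable_realfun.measurable_funM => //; exact: measurable_funX.
have mZ := GT_mfun sG _ mZG.
have mZlp := GT_mfun sG _ mZlpG.
have mZln := GT_mfun sG _ mZlnG.
have mq := GT_mfun sG _ mqG.
have mM := GT_mfun sG _ mMG.
have mI := GT_mfun sG _ mIG.
have ml := GT_mfun sG _ mlG.
have mD : measurable_fun setT D.
  apply: measurable_funB => //; exact: (GM_T (hF.1 t.+1) _ (hX t)).
have mDp : measurable_fun setT Dp := measurable_funrpos mD.
have mDn : measurable_fun setT Dn := measurable_funrneg mD.
have mD2 : measurable_fun setT (fun x => D x ^+ 2) := measurable_funX 2 mD.
have iD : P.-integrable setT (EFin \o D).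
  apply: (@eq_integrable _ _ _ P setT measurableT (fun x => (X t.+1 x)%:E - (cst mu%:E) x)%E) => //.
  apply: integrableB => //; exact: finite_measure_integrable_cst.
have eqpn B : F t B -> (\int[P]_(x in B) (Dp x)%:E = \int[P]_(x in B) (Dn x)%:E)%E.
  move=> GB; have mB := sG.2 _ GB.
  have iDB := integrableS measurableT mB (subsetT _) iD.
  have h0 : (\int[P]_(x in B) (D x)%:E = 0)%E.
    have -> : (\int[P]_(x in B) (D x)%:E =
        \int[P]_(x in B) ((EFin \o X t.+1) \- (cst mu%:E))%E x)%E.
      by apply: eq_integral => x _; rewrite /= EFinB.
    rewrite integralB //; [|exact: integrableS iX|exact: finite_measure_integrable_cst].
    rewrite (hXA B GB) subee // integrable_fin_num //.
    exact: finite_measure_integrable_cst.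
  have e1 : (\int[P]_(x in B) (Dp x)%:E = \int[P]_(x in B) ((fun x => (D x)%:E)^\+ x))%E.
    by apply: eq_integral => x _; rewrite funeposE /Dp /funrpos EFin_max.
  have e2 : (\int[P]_(x in B) (Dn x)%:E = \int[P]_(x in B) ((fun x => (D x)%:E)^\- x))%E.
    by apply: eq_integral => x _; rewrite funenegE /Dn /funrneg EFin_max.
  have fn : (\int[P]_(x in B) (Dn x)%:E)%E \is a fin_num.
    by rewrite e2; apply: integrable_fin_num => //; exact: integrable_funeneg.
  move: h0; rewrite integralE -e1 -e2 => h0.
  by rewrite -[LHS](subeK _ fn) h0 add0e.
have mYT := GM_T sG _ mY.
have le2 B : F t B -> (\int[P]_(x in B) (D x ^+ 2)%:E <= \int[P]_(x in B) (sigma ^+ 2)%:E)%E.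
  move=> GB; have mB := sG.2 _ GB.
  have iYB := integrableS measurableT mB (subsetT _) iY.
  rewrite (_ : (\int[P]_(x in B) (D x ^+ 2)%:E = \int[P]_(x in B) (Y x)%:E)%E); last first.
    exact: hYA.
  apply: (@le_trans _ _ (\int[P]_(x in B) ((fun x => (Y x)%:E)^\+ x))%E).
    rewrite integralE lee_subel_addr; last first.
      by apply: integrable_fin_num => //; exact: integrable_funepos.
    by apply: leeDl; apply: integral_ge0 => x _; exact: funeneg_ge0.
  apply: ae_ge0_le_integral => //. all: try (by move=> x _; exact: funepos_ge0).
  - apply: measurable_funepos; apply/measurable_EFinP; exact: measurable_funTS.
  - by move=> x _; rewrite lee_fin sqr_ge0.
  - apply: filterS aeY => x hx _; rewrite funeposE ge_max lee_fin hx /=.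
    by rewrite lee_fin sqr_ge0.
have h31 : (\int[P]_x (Z x * lp x * Dp x)%:E <= \int[P]_x (Z x * lp x * Dn x)%:E)%E.
  apply: (K_le sG P Dp Dn Dp0 Dn0 mDp mDn _ (fun x => Z x * lp x)) => //.
    by move=> B GB; rewrite eqpn.
  by move=> x; rewrite mulr_ge0.
have h42 : (\int[P]_x (Z x * ln x * Dn x)%:E <= \int[P]_x (Z x * ln x * Dp x)%:E)%E.
  apply: (K_le sG P Dn Dp Dn0 Dp0 mDn mDp _ (fun x => Z x * ln x)) => //.
    by move=> B GB; rewrite eqpn.
  by move=> x; rewrite mulr_ge0.
have h5 : (\int[P]_x (q x * D x ^+ 2)%:E <= \int[P]_x (q x * sigma ^+ 2)%:E)%E.
  apply: (K_le sG P (fun x => D x ^+ 2) (fun _ => sigma ^+ 2)) => //.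
  all: try by move=> x; rewrite sqr_ge0.
have mE : measurable_fun setT (fun x => Z x * expR (g (l x * D x))).
  apply: measurable_realfun.measurable_funM => //.
  apply: measurableT_comp; first exact: measurable_expR.
  apply: measurableT_comp => //; exact: measurable_realfun.measurable_funM.
have mT1 : measurable_fun setT (fun x => Z x * lp x * Dn x).
  exact: (measurable_realfun.measurable_funM mZlp mDn).
have mT2 : measurable_fun setT (fun x => Z x * ln x * Dp x).
  exact: (measurable_realfun.measurable_funM mZln mDp).
have mT3 : measurable_fun setT (fun x => Z x * lp x * Dp x).
  exact: (measurable_realfun.measurable_funM mZlp mDp).
have mT4 : measurable_fun setT (fun x => Z x * ln x * Dn x).
  exact: (measurable_realfun.measurable_funM mZln mDn).
have mT5 : measurable_fun setT (fun x => q x * D x ^+ 2).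
  exact: (measurable_realfun.measurable_funM mq mD2).
have E0 x : 0 <= Z x * expR (g (l x * D x)) by rewrite mulr_ge0 ?expR_ge0.
have T10 x : 0 <= Z x * lp x * Dn x := mulr_ge0 (mulr_ge0 (Z0 x) (lp0 x)) (Dn0 x).
have T20 x : 0 <= Z x * ln x * Dp x := mulr_ge0 (mulr_ge0 (Z0 x) (ln0 x)) (Dp0 x).
have T30 x : 0 <= Z x * lp x * Dp x := mulr_ge0 (mulr_ge0 (Z0 x) (lp0 x)) (Dp0 x).
have T40 x : 0 <= Z x * ln x * Dn x := mulr_ge0 (mulr_ge0 (Z0 x) (ln0 x)) (Dn0 x).
have T50 x : 0 <= q x * D x ^+ 2 := mulr_ge0 (q0 x) (sqr_ge0 _).
have hmain : (\int[P]_x (Z x * expR (g (l x * D x)) + Z x * lp x * Dn x + Z x * ln x * Dp x)%:E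
   <= \int[P]_x (Z x + Z x * lp x * Dp x + Z x * ln x * Dn x + q x * D x ^+ 2)%:E)%E.
  apply: intle.
  - by move=> x; rewrite !addr_ge0.
  - by apply: measurable_funD => //; exact: measurable_funD.
  - by apply: measurable_funD => //; apply: measurable_funD => //; exact: measurable_funD.
  - move=> x; exact: (pw_real (Z0 x) (hg _) (maxpn (l x)) (maxpn (D x))).
rewrite intD3 // intD4 // in hmain.
have mIM : measurable_fun setT (fun x => \1_A x * M t x).
  exact: measurable_realfun.measurable_funM.
have IM0 x : 0 <= \1_A x * M t x.
  by apply: mulr_ge0; [case: (I01 x)|exact: M_ge0].
have hJ : (\int[P]_x (Z x)%:E + \int[P]_x (q x * sigma ^+ 2)%:E
    <= \int[P]_x (\1_A x * M t x)%:E)%E.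
  rewrite -intD //; last 2 first.
  - by move=> x; rewrite mulr_ge0 ?sqr_ge0.
  - exact: measurable_realfun.measurable_funM.
  apply: intle => //.
  - by move=> x; rewrite addr_ge0 // mulr_ge0 ?sqr_ge0.
  - apply: measurable_funD => //; exact: measurable_realfun.measurable_funM.
  move=> x.
  have -> : Z x + q x * sigma ^+ 2 = (\1_A x * M t x) * (expR (- a x) * (1 + a x)).
    by rewrite /q /Z /a; ring.
  apply: ler_piMr; [exact: IM0|exact: expRN1D_le1].
have hIM : (\int[P]_x (\1_A x * M t x)%:E <= \int[P]_x (M t x)%:E)%E.
  apply: intle => //; try exact: mM.
  by move=> x; apply: ler_piMl (M_ge0 t x) (I01 x).2.
have hJ5 : (\int[P]_x (Z x)%:E + \int[P]_x (q x * D x ^+ 2)%:E < +oo)%E.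
  apply: le_lt_trans fin; apply: le_trans hIM; apply: le_trans hJ.
  by apply: leeD.
have fin1 : (\int[P]_x (Z x * lp x * Dn x)%:E)%E \is a fin_num.
  rewrite ge0_fin_numE; last exact: int_ge0.
  apply: le_lt_trans hJ5; rewrite -intD //; try exact: measurable_realfun.measurable_funM.
  apply: intle => //; try (apply: measurable_funD => //; exact: measurable_realfun.measurable_funM).
  by move=> x; exact: (pw_real2 (Z0 x)).1.
have fin2 : (\int[P]_x (Z x * ln x * Dp x)%:E)%E \is a fin_num.
  rewrite ge0_fin_numE; last exact: int_ge0.
  apply: le_lt_trans hJ5; rewrite -intD //; try exact: measurable_realfun.measurable_funM.
  apply: intle => //; try (apply: measurable_funD => //; exact: measurable_realfun.measurable_funM).
  by move=> x; exact: (pw_real2 (Z0 x)).2.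
have hE : (\int[P]_x (Z x * expR (g (l x * D x)))%:E
    <= \int[P]_x (Z x)%:E + \int[P]_x (q x * sigma ^+ 2)%:E)%E.
  rewrite -(leeD2rE _ _ fin2) -(leeD2rE _ _ fin1).
  set Ie := (\int[P]_x (Z x * expR (g (l x * D x)))%:E)%E.
  set I0 := (\int[P]_x (Z x)%:E)%E.
  set J := (\int[P]_x (q x * sigma ^+ 2)%:E)%E.
  set I1 := (\int[P]_x (Z x * lp x * Dn x)%:E)%E.
  set I2 := (\int[P]_x (Z x * ln x * Dp x)%:E)%E.
  rewrite addeAC [X in (_ <= X)%E]addeAC; apply: le_trans hmain _.
  apply: le_trans (leeD (leeD (leeD (lexx I0) h31) h42) h5) _.
  rewrite -/I1 -/I2 -/J addeAC (addeAC (I0 + J) I2 I1) (addeAC I0 J I1) (addeAC (I0 + I1) J I2).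
  exact: lexx.
rewrite (int_indic P A (M t.+1)) (int_indic P A (M t)); apply: le_trans hJ.
apply: le_trans hE; rewrite le_eqVlt; apply/orP; left; apply/eqP.
apply: eq_integral => x _; congr (_%:E).
rewrite MS /Z expRD; ring.

Qed.

Lemma FsetT t : F t setT.
Proof. by rewrite -(GmeasE (hF.1 t)); exact: measurableT. Qed.

Lemma M_int_le1 t : (\int[P]_x (M t x)%:E <= 1)%E.
Proof.
elim: t => [|t IH].
  rewrite (_ : (\int[P]_x (M 0 x)%:E = \int[P]_x (cst 1%E) x)%E); last first.
    by apply: eq_integral => x _; rewrite /catoniM big_ord0.
  by rewrite integral_cst // mul1e; apply: probability_le1.
have fin : (\int[P]_x (M t x)%:E < +oo)%E by exact: le_lt_trans IH (ltry _).
apply: le_trans IH; exact: (core_step t fin setT (FsetT t)).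
Qed.

Lemma M_integrable t : P.-integrable setT (EFin \o M t).
Proof.
apply/integrableP; split.
  apply/measurable_EFinP; exact: (GM_T (hF.1 t) _ (M_adapted t)).
apply: (@le_lt_trans _ _ 1%E); last exact: ltry.
apply: le_trans (M_int_le1 t); rewrite le_eqVlt; apply/orP; left.
apply/eqP; apply: eq_integral => x _.
by rewrite /comp gee0_abs // lee_fin M_ge0.
Qed.

Lemma M_super : supermartingale P F M.
Proof.
split; [exact: M_adapted|exact: M_integrable|].
move=> t Y [iM mY iY hYA].
apply: (L_ae (hF.1 t) P Y (M t)) => //.
- exact: M_adapted.
- exact: M_integrable.
move=> A GA; rewrite -hYA //; apply: core_step => //.
exact: le_lt_trans (M_int_le1 t) (ltry _).
Qed.

End Main.

Theorem lemma6 (R : realType) (d : measure_display) (T : measurableType d)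
  (P : probability T R) (F : nat -> set (set T)) (X lam : nat -> T -> R)
  (mu sigma : R) (phi : R -> R) :
  filtration F ->
  (forall A, F 0%N A -> A = set0 \/ A = setT) ->
  (forall t, G_measurable (F t.+1) (X t.+1)) ->
  (forall t, cond_exp_version P (F t) (X t.+1) (fun _ => mu)) ->
  (forall t, exists Y : T -> R,
      cond_exp_version P (F t) (fun x => (X t.+1 x - mu) ^+ 2) Y /\
      {ae P, forall x, Y x <= sigma ^+ 2}) ->
  (forall t, G_measurable (F t) (lam t.+1)) ->
  catoni_type phi ->
  (forall t x, 0 <= catoniM phi lam X mu sigma t x) /\
  (forall t x, 0 <= catoniN phi lam X mu sigma t x) /\
  supermartingale P F (catoniM phi lam X mu sigma) /\
  supermartingale P F (catoniN phi lam X mu sigma).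
Proof.
move=> hF _ hX hmu hsig hlam [phi_nd phi_b].
have mphi : measurable_fun setT phi := nondecreasing_measurable measurableT phi_nd.
have pos v : 0 < 1 + v + v ^+ 2 / 2 :> R.
  have := sqr_ge0 (v + 1); nra.
have hgM v : expR (phi v) <= 1 + v + v ^+ 2 / 2.
  rewrite -[X in _ <= X](@lnK _ (1 + v + v ^+ 2 / 2)); last by rewrite posrE.
  by rewrite ler_expR; exact: (phi_b v).2.
pose g v := - phi (- v).
have mg : measurable_fun setT g.
  rewrite /g; apply: measurable_funN; apply: measurableT_comp => //.
  first [done | exact: (measurable_funN measurable_id) | exact: measurable_oppr | idtac].
have hgN v : expR (g v) <= 1 + v + v ^+ 2 / 2.
  rewrite -[X in _ <= X](@lnK _ (1 + v + v ^+ 2 / 2)); last by rewrite posrE.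
  rewrite ler_expR /g lerNl; have := (phi_b (- v)).1.
  by rewrite opprK sqrrN.
pose lam' t x := - lam t x.
have eqN : catoniN phi lam X mu sigma = catoniM g lam' X mu sigma.
  apply/funext => t; apply/funext => x; rewrite /catoniN /catoniM.
  apply: eq_bigr => i _; congr expR.
  by rewrite /g /lam' sqrrN mulNr opprK.
have hlam' t : G_measurable (F t) (lam' t.+1).
  apply/(GM_mfun (hF.1 t)); apply: measurable_funN.
  exact/(GM_mfun (hF.1 t)).
rewrite eqN; split; [|split; [|split]].
- exact: M_ge0.
- exact: M_ge0.
- exact: (M_super _ _ _ _ _ _ _ _ _ _ hF hX hmu hsig hlam mphi hgM).
- exact: (M_super _ _ _ _ _ _ _ _ _ _ hF hX hmu hsig hlam' mg hgN).
Qed.
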